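(* Let $n\ge3$ be odd and let $D\subseteq\{0,1,\dots,n-1\}$ with $|D|=2$. Then the unidirectional cycle $\overrightarrow{C_n}$ is $D$-antimagic.
   Context: An oriented graph is a simple graph each of whose edges is given one direction. For vertices $u,v$, $d(u,v)$ is the length of a shortest directed path from $u$ to $v$ ($d(u,u)=0$). For a set $D$ of nonnegative integers, $N_D(v)=\{y : d(v,y)\in D\}$; for a bijection $f:V\to\{1,\dots,|V|\}$, $\omega_D(v)=\sum_{x\in N_D(v)}f(x)$ (empty sum $0$); $f$ is $D$-antimagic if distinct vertices have distinct $D$-weights, and the graph is $D$-antimagic if such an $f$ exists. The unidirectional cycle $\overrightarrow{C_n}$ ($n\ge3$) has vertices $v_1,\dots,v_n$ and arcs $(v_i,v_{i+1})$ for $1\le i\le n-1$ and $(v_n,v_1)$; $d(v_i,v_j)=(j-i)\bmod n$. *)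

(* Defs.v *)
From mathcomp Require Import all_boot.
Set Implicit Arguments. Unset Strict Implicit. Unset Printing Implicit Defensive.

(* Unidirectional cycle C_n on vertices 'I_n (v_{i+1} is the ordinal i).
   Distance d(v_i, v_j) = (j - i) mod n, as stated in the paper. *)
Definition cycle_dist (n : nat) (u v : 'I_n) : nat := (v + n - u) %% n.

Definition nbhdD (n : nat) (D : {set 'I_n}) (v : 'I_n) : {set 'I_n} :=
  [set y | [exists k in D, cycle_dist v y == nat_of_ord k]].

(* A labeling f : V -> {1..n} is encoded as a bijection g : 'I_n -> 'I_n with
   f x = g x + 1. *)
Definition Dweight (n : nat) (D : {set 'I_n}) (g : 'I_n -> 'I_n) (v : 'I_n) : nat :=
  \sum_(x in nbhdD D v) (g x).+1.

Definition D_antimagic_labeling (n : nat) (D : {set 'I_n}) (g : 'I_n -> 'I_n) :=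
  bijective g /\ injective (Dweight D g).

Definition cycle_D_antimagic (n : nat) (D : {set 'I_n}) :=
  exists g : 'I_n -> 'I_n, D_antimagic_labeling D g.

(* Main.v *)
Require Import Defs.
From mathcomp Require Import all_boot.
From mathcomp Require Import zify.
Set Implicit Arguments. Unset Strict Implicit. Unset Printing Implicit Defensive.

Lemma W_aux m q1 q2 s1 s2 H : 0 < m -> s1 < m -> s2 < m -> H < m ->
  (q1 * m).*2 + (H + s1) = (q2 * m).*2 + (H + s2) -> q1 = q2 /\ s1 = s2.
Proof.
move=> m0 l1 l2 lh e.
have [lt|gt|eq] := ltngtP q1 q2.
- have : q1.+1 * m <= q2 * m by rewrite leq_mul2r lt orbT.
  rewrite mulSn. lia.
- have : q2.+1 * m <= q1 * m by rewrite leq_mul2r gt orbT.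
  rewrite mulSn. lia.
- subst. lia.
Qed.
Lemma S_aux m r1 r2 : r1 < m -> r2 < m -> r1.+1 %% m = r2.+1 %% m -> r1 = r2.
Proof.
move=> l1 l2.
have c1 : r1.+1 < m \/ r1.+1 = m by lia.
have c2 : r2.+1 < m \/ r2.+1 = m by lia.
case: c1 c2 => [x1|x1] [x2|x2]; rewrite ?x1 ?x2 ?modnn ?modn_small //; try lia.
all: move=> E; move: x2 x1; rewrite E ?modnn ?modn_small //; lia.
Qed.

Section Arith.
Variables n c : nat.
Hypotheses (hn : 0 < n) (hc0 : 0 < c) (hcn : c < n) (hodd : odd n).

Let g := gcdn c n.
Let m := n %/ g.
Let c' := c %/ g.
Let h := uphalf m.

Lemma g_gt0 : 0 < g. Proof. by rewrite gcdn_gt0 hn orbT. Qed.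
Lemma gm : g * m = n. Proof. by rewrite mulnC divnK // dvdn_gcdr. Qed.
Lemma gc : g * c' = c. Proof. by rewrite mulnC divnK // dvdn_gcdl. Qed.
Lemma m_gt0 : 0 < m.
Proof. have := gm; case: (m) => //; lia. Qed.
Lemma m_odd : odd m.
Proof. by move: hodd; rewrite -gm oddM => /andP[]. Qed.
Lemma cop : coprime c' m.
Proof.
apply/eqP. have := g_gt0. have e : gcdn c' m * g = g.
  by rewrite muln_gcdl ![_ * g]mulnC gm gc.
nia.
Qed.

Definition Fn i := if odd i then h + i./2 else i./2.

Lemma m_eq : m = h.*2.-1.
Proof. have := m_odd; rewrite /h uphalfE. have := m_gt0.
case: (m) => // k _ /=. move=> ok. rewrite -[in LHS](odd_double_half k).
by move: ok; case: (odd k) => //= _; rewrite doubleS.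
Qed.

Lemma h_lt : h.-1 < m.
Proof. have := m_gt0. rewrite m_eq. lia. Qed.

Lemma Fn_lt i : i < m -> Fn i < m.
Proof.
rewrite m_eq /Fn => lt. have := odd_double_half i. case: (odd i) => /= e; lia.
Qed.

Lemma Fn_inj i j : i < m -> j < m -> Fn i = Fn j -> i = j.
Proof.
rewrite m_eq /Fn => li lj. have := odd_double_half i; have := odd_double_half j.
case: (odd i); case: (odd j) => /= ej ei; lia.
Qed.

Lemma Fn_sum i : i < m -> Fn i + Fn ((i.+1) %% m) = h.-1 + (i.+1) %% m.
Proof.
move=> li. have mo := m_odd. have me := m_eq.
have [lt|E] : i.+1 < m \/ i.+1 = m by lia.
- rewrite modn_small // /Fn /=. have := odd_double_half i.
  have := odd_double_half i.+1. rewrite /=.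
  case: (odd i) => /= e1 e2; lia.
- rewrite E modnn /Fn.
  have oi : odd i = false by move: mo; rewrite -E /= => /negPf.
  rewrite oi /=. have := odd_double_half i. rewrite oi /=. lia.
Qed.

Definition En k := k %/ m + g * ((k %% m * c') %% m).
Definition Ln k := k %/ m * m + Fn (k %% m).
Definition nx k := k %/ m * m + (k %% m).+1 %% m.

Lemma kdiv k : k < n -> k %/ m < g.
Proof. move=> lk; rewrite ltn_divLR ?m_gt0 // gm; exact: lk. Qed.

Lemma split_lt j r : j < g -> r < m -> j * m + r < n.
Proof. move=> lj lr. rewrite -gm. nia. Qed.

Lemma split_lt2 j r : j < g -> r < m -> j + g * r < n.
Proof. move=> lj lr. rewrite -gm. nia. Qed.

Lemma En_lt k : k < n -> En k < n.
Proof. move=> lk; apply: split_lt2; [exact: kdiv|by rewrite ltn_mod m_gt0]. Qed.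

Lemma Ln_lt k : k < n -> Ln k < n.
Proof. move=> lk; apply: split_lt; [exact: kdiv|apply: Fn_lt; by rewrite ltn_mod m_gt0]. Qed.

Lemma nx_lt k : k < n -> nx k < n.
Proof. move=> lk; apply: split_lt; [exact: kdiv|by rewrite ltn_mod m_gt0]. Qed.

Lemma nx_div k : nx k %/ m = k %/ m.
Proof. by rewrite /nx divnMDl ?m_gt0 // (divn_small (ltn_pmod _ m_gt0)) addn0. Qed.
Lemma nx_mod k : nx k %% m = (k %% m).+1 %% m.
Proof. by rewrite /nx modnMDl modn_mod. Qed.

Lemma split_eq k1 k2 : k1 %/ m = k2 %/ m -> k1 %% m = k2 %% m -> k1 = k2.
Proof. by move=> e1 e2; rewrite (divn_eq k1 m) (divn_eq k2 m) e1 e2. Qed.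

Lemma dm_small j x : j < g -> x < m -> (j + g * x) %/ g = x /\ (j + g * x) %% g = j.
Proof.
move=> lj _. rewrite mulnC addnC divnMDl ?g_gt0 // modnMDl divn_small // modn_small //.
by rewrite addn0.
Qed.

Lemma En_inj k1 k2 : k1 < n -> k2 < n -> En k1 = En k2 -> k1 = k2.
Proof.
move=> l1 l2 e.
have [a1 b1] := dm_small (kdiv l1) (ltn_pmod ((k1 %% m) * c') m_gt0).
have [a2 b2] := dm_small (kdiv l2) (ltn_pmod ((k2 %% m) * c') m_gt0).
rewrite /En in e. apply: split_eq; first by rewrite -b1 -b2 e.
have {}e : (k1 %% m * c') %% m = (k2 %% m * c') %% m by rewrite -a1 -a2 e.
clear a1 a2 b1 b2.
have r1 : k1 %% m < m by rewrite ltn_mod m_gt0.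
have r2 : k2 %% m < m by rewrite ltn_mod m_gt0.
wlog le : k1 k2 l1 l2 e r1 r2 / k2 %% m <= k1 %% m.
  move=> H. case: (leqP (k2 %% m) (k1 %% m)) => [le|lt]; first exact: H.
  symmetry; apply: H => //; lia.
have : (k1 %% m * c' == k2 %% m * c' %[mod m]) by rewrite e.
rewrite eqn_mod_dvd ?leq_mul2r ?le ?orbT // -mulnBl Gauss_dvdl; last by rewrite coprime_sym cop.
move=> dv. rewrite -(modn_small r1) -(modn_small r2). apply/eqP.
by rewrite eqn_mod_dvd.
Qed.

Lemma modA j x : j < g -> (j + g * x) %% n = j + g * (x %% m).
Proof.
move=> lj. have ex : g * x = g * (x %% m) + x %/ m * n.
  rewrite -gm {1}(divn_eq x m). lia.
rewrite ex addnA addnC modnMDl modn_small //. apply: split_lt2 => //.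
by rewrite ltn_mod m_gt0.
Qed.

Lemma En_shift k : k < n -> (En k + c) %% n = En (nx k).
Proof.
move=> lk. rewrite /En nx_div nx_mod -gc -addnA -mulnDr modA ?kdiv //.
congr (_ + g * _). by rewrite modnDml modnMml mulSn addnC.
Qed.

Lemma Ln_inj k1 k2 : k1 < n -> k2 < n -> Ln k1 = Ln k2 -> k1 = k2.
Proof.
move=> l1 l2 e.
have r1 : k1 %% m < m by rewrite ltn_mod m_gt0.
have r2 : k2 %% m < m by rewrite ltn_mod m_gt0.
have f1 := Fn_lt r1. have f2 := Fn_lt r2.
have : Ln k1 %/ m = Ln k2 %/ m by rewrite e.
rewrite /Ln !divnMDl ?m_gt0 // (divn_small f1) (divn_small f2) !addn0 => ed.
apply: split_eq => //. apply: Fn_inj => //. by move: e; rewrite /Ln ed => /addnI.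
Qed.

Lemma Wsum k : k < n -> Ln k + Ln (nx k) = (k %/ m * m).*2 + (h.-1 + (k %% m).+1 %% m).
Proof.
move=> lk. rewrite /Ln nx_div nx_mod -Fn_sum ?ltn_mod ?m_gt0 //.
move: (k %/ m * m) (Fn (k %% m)) (Fn ((k %% m).+1 %% m)) => x y z; lia.
Qed.

Lemma W_inj k1 k2 : k1 < n -> k2 < n -> Ln k1 + Ln (nx k1) = Ln k2 + Ln (nx k2) -> k1 = k2.
Proof.
move=> l1 l2. rewrite !Wsum // => e.
have r1 : k1 %% m < m by rewrite ltn_mod m_gt0.
have r2 : k2 %% m < m by rewrite ltn_mod m_gt0.
have s1 : (k1 %% m).+1 %% m < m by rewrite ltn_mod m_gt0.
have s2 : (k2 %% m).+1 %% m < m by rewrite ltn_mod m_gt0.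
have hm := h_lt.
have [q s] := W_aux m_gt0 s1 s2 hm e.
apply: split_eq => //. exact: S_aux r1 r2 s.
Qed.

End Arith.

Definition sho n (hn : 0 < n) (u : 'I_n) (k : nat) : 'I_n := Ordinal (ltn_pmod (u + k) hn).

Section Main.
Variables n c : nat.
Hypotheses (hn : 0 < n) (hc0 : 0 < c) (hcn : c < n) (hodd : odd n).

Definition Eo (k : 'I_n) : 'I_n := Ordinal (En_lt hn hc0 hcn hodd (ltn_ord k)).
Definition Lo (k : 'I_n) : 'I_n := Ordinal (Ln_lt hn hc0 hcn hodd (ltn_ord k)).
Definition Nxo (k : 'I_n) : 'I_n := Ordinal (nx_lt hn hc0 hcn hodd (ltn_ord k)).

Lemma Eo_inj : injective Eo.
Proof. move=> k1 k2 /(congr1 val) /= e; apply: val_inj; exact: En_inj e. Qed.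
Lemma Lo_inj : injective Lo.
Proof. move=> k1 k2 /(congr1 val) /= e; apply: val_inj; exact: Ln_inj e. Qed.

Definition fo (u : 'I_n) : 'I_n := Lo (invF Eo_inj u).

Lemma fo_bij : bijective fo.
Proof. apply: injF_bij => u1 u2 /Lo_inj e. by rewrite -(f_invF Eo_inj u1) e f_invF. Qed.

Lemma sho_Eo k : sho hn (Eo k) c = Eo (Nxo k).
Proof. apply: val_inj => /=. exact: En_shift. Qed.

Lemma Wo_inj : injective (fun u => (fo u + fo (sho hn u c))%N).
Proof.
move=> u1 u2 /=. rewrite -(f_invF Eo_inj u1) -(f_invF Eo_inj u2) !sho_Eo /fo !invF_f /=.
move=> e. have := W_inj hn hc0 hcn hodd (ltn_ord _) (ltn_ord _) e.
by move=> /val_inj ->.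
Qed.
End Main.

Lemma dist_eq n (hn : 0 < n) (v y : 'I_n) (a : nat) : a < n ->
  (cycle_dist v y == a) = (y == sho hn v a).
Proof.
move=> la. rewrite /cycle_dist -val_eqE /=.
have lv := ltn_ord v; have ly := ltn_ord y.
have [le|lt] := leqP v y.
- have -> : y + n - v = (y - v) + n by lia.
  rewrite modnDr modn_small; last by lia.
  have [lt2|ge2] := ltnP (v + a) n.
  + rewrite (modn_small lt2). apply/eqP/eqP; lia.
  + have -> : v + a = (v + a - n) + n by lia.
    rewrite modnDr modn_small; last by lia. apply/eqP/eqP; lia.
- rewrite modn_small; last by lia.
  have [lt2|ge2] := ltnP (v + a) n.
  + rewrite (modn_small lt2). apply/eqP/eqP; lia.
  + have -> : v + a = (v + a - n) + n by lia.
    rewrite modnDr modn_small; last by lia. apply/eqP/eqP; lia.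
Qed.

Lemma nbhd2 n (hn : 0 < n) (a b v : 'I_n) :
  nbhdD [set a; b] v = [set sho hn v a; sho hn v b].
Proof.
apply/setP => y. rewrite !inE. apply/existsP/idP.
- move=> [k /andP[]]. rewrite !inE => /orP[] /eqP -> ; rewrite dist_eq ?ltn_ord // => ->; rewrite ?orbT //.
- move=> /orP[] E; [exists a| exists b]; rewrite !inE eqxx ?orbT /= dist_eq ?ltn_ord //.
Qed.

Lemma sho_ne n (hn : 0 < n) (a b v : 'I_n) : a != b -> sho hn v a != sho hn v b.
Proof.
apply: contraNneq => /(congr1 val) /= /eqP. rewrite eqn_modDl !modn_small ?ltn_ord //. Qed.

Lemma sho_sho n (hn : 0 < n) (a b v : 'I_n) : a < b -> sho hn v b = sho hn (sho hn v a) (b - a).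
Proof. move=> lab. apply: val_inj => /=. rewrite modnDml. congr (_ %% _). lia. Qed.

Lemma sho_inj n (hn : 0 < n) (a : 'I_n) : injective (fun v => sho hn v a).
Proof.
move=> v1 v2 /(congr1 val) /= /eqP. rewrite eqn_modDr !modn_small ?ltn_ord //.
by move=> /eqP /val_inj.
Qed.

Theorem mainTheorem15 (n : nat) (D : {set 'I_n}) :
  3 <= n -> odd n -> #|D| = 2 -> cycle_D_antimagic D.
Proof.
move=> n3 no /eqP /cards2P [a [b [ab ->]]].
have hn : 0 < n by lia.
wlog lab : a b ab / a < b.
  move=> H. have [l|l|e] := ltngtP a b; first exact: H.
  - rewrite setUC. apply: H => //. by rewrite eq_sym.
  - by move: ab; rewrite (val_inj e) eqxx.
have hc0 : 0 < b - a by lia.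
have hcn : b - a < n by have := ltn_ord b; lia.
exists (fo hn hc0 hcn no). split; first exact: fo_bij.
have DW v : Dweight [set a; b] (fo hn hc0 hcn no) v =
   (fo hn hc0 hcn no (sho hn v a) + fo hn hc0 hcn no (sho hn (sho hn v a) (b - a))).+2.
  rewrite /Dweight nbhd2 big_setU1 /=; last by rewrite inE sho_ne.
  rewrite big_set1 (sho_sho hn v lab). lia.
move=> v1 v2. rewrite !DW => -[] /(Wo_inj (hn:=hn)) /sho_inj. done.
Qed.
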